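(* In the two-bus model of the context, let $\boldsymbol\omega=(\overline{\mathbf q},\mathbf d)$ and $\boldsymbol\omega'=(\overline{\mathbf q},\mathbf d')$ be instances with the same generation capacities, both feasible for \textsf{ED-2b} and \textsf{SCED-2b}, such that $d_2'=d_2$, $d_1'\ge d_1$, $d_1+d_2>0$, and $\overline q_1\ge d_1'+d_2$. Then $\mathsf{PoS}(\boldsymbol\omega')\le\mathsf{PoS}(\boldsymbol\omega)$.
   Context: Two-bus network: buses $v_1,v_2$ joined by two parallel lines $e_1,e_2$ with susceptances $B_1,B_2>0$ and thermal limits $\overline f_1,\overline f_2>0$. Bus $i\in\{1,2\}$ has a generator with capacity $\overline q_i\ge 0$ and linear cost $\alpha_i q_i$, and a demand $d_i\ge 0$; throughout $0<\alpha_1\le\alpha_2$ (bus 1 is the cheap bus). An instance is $\boldsymbol\omega=(\overline{\mathbf q},\mathbf d)$ with $\overline{\mathbf q}=(\overline q_1,\overline q_2)$, $\mathbf d=(d_1,d_2)$. Define $f^{\mathsf{ed}}:=(B_1+B_2)\min\{\overline f_1/B_1,\overline f_2/B_2\}$ and $f^{\mathsf{sc}}:=\min\{\overline f_1,\overline f_2\}$ (note $f^{\mathsf{sc}}\le f^{\mathsf{ed}}$). The economic dispatch problem \textsf{ED-2b} is: minimize $\alpha_1q_1+\alpha_2q_2$ over $(q_1,q_2)$ subject to $0\le q_1\le\overline q_1$, $0\le q_2\le\overline q_2$, $q_1+q_2=d_1+d_2$, and $-f^{\mathsf{ed}}\le q_1-d_1\le f^{\mathsf{ed}}$. The security-constrained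 problem \textsf{SCED-2b} is the same problem with the additional constraint $-f^{\mathsf{sc}}\le q_1-d_1\le f^{\mathsf{sc}}$. Let $c^\star_{\mathsf{ed}}(\boldsymbol\omega)$ and $c^\star_{\mathsf{sc}}(\boldsymbol\omega)$ be the optimal values of \textsf{ED-2b} and \textsf{SCED-2b} for an instance $\boldsymbol\omega$ feasible for both. The price of security of $\boldsymbol\omega$ is $\mathsf{PoS}(\boldsymbol\omega):=c^\star_{\mathsf{sc}}(\boldsymbol\omega)/c^\star_{\mathsf{ed}}(\boldsymbol\omega)$. *)

(* Defs.v *)
From Stdlib Require Import Reals Lra.
Open Scope R_scope.

(* Network data: susceptances B1 B2, thermal limits fb1 fb2. *)
Definition f_ed (B1 B2 fb1 fb2 : R) : R := (B1 + B2) * Rmin (fb1 / B1) (fb2 / B2).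
Definition f_sc (fb1 fb2 : R) : R := Rmin fb1 fb2.

Definition feas_ed (B1 B2 fb1 fb2 qb1 qb2 d1 d2 q1 q2 : R) : Prop :=
  0 <= q1 <= qb1 /\ 0 <= q2 <= qb2 /\ q1 + q2 = d1 + d2 /\
  - f_ed B1 B2 fb1 fb2 <= q1 - d1 <= f_ed B1 B2 fb1 fb2.

Definition feas_sc (B1 B2 fb1 fb2 qb1 qb2 d1 d2 q1 q2 : R) : Prop :=
  feas_ed B1 B2 fb1 fb2 qb1 qb2 d1 d2 q1 q2 /\
  - f_sc fb1 fb2 <= q1 - d1 <= f_sc fb1 fb2.

Definition cost (a1 a2 q1 q2 : R) : R := a1 * q1 + a2 * q2.

Definition is_opt_value (F : R -> R -> Prop) (a1 a2 c : R) : Prop :=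
  (exists q1 q2, F q1 q2 /\ cost a1 a2 q1 q2 = c) /\
  (forall q1 q2, F q1 q2 -> c <= cost a1 a2 q1 q2).

Definition feasible (F : R -> R -> Prop) : Prop := exists q1 q2, F q1 q2.

(* Main.v *)
Require Import Defs.
From Stdlib Require Import Reals Lra Psatz.
Open Scope R_scope.

Definition PC (C : R -> Prop) qb1 qb2 d1 d2 q1 q2 : Prop :=
  0 <= q1 <= qb1 /\ 0 <= q2 <= qb2 /\ q1 + q2 = d1 + d2 /\ C (q1 - d1).

Lemma opt_ext (F G : R -> R -> Prop) a1 a2 c :
  (forall q1 q2, F q1 q2 <-> G q1 q2) -> is_opt_value F a1 a2 c -> is_opt_value G a1 a2 c.
Proof.
  intros E [[q1 [q2 [H1 H2]]] H3]. split.
  - exists q1, q2. split; [apply E|]; auto.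
  - intros x y Hx. apply H3. apply E. auto.
Qed.

Lemma shift (C : R -> Prop) a1 a2 qb1 qb2 d1 d2 d1' c c' :
  (forall x y, C x -> x <= y <= 0 -> C y) ->
  a1 <= a2 -> 0 <= d1 -> d1 <= d1' -> 0 <= d2 -> d1' + d2 <= qb1 ->
  is_opt_value (PC C qb1 qb2 d1 d2) a1 a2 c ->
  is_opt_value (PC C qb1 qb2 d1' d2) a1 a2 c' ->
  c' = c + a1 * (d1' - d1).
Proof.
  intros HC Ha Hd1 Hdd Hd2 Hq [[q1 [q2 [Hf Hc]]] Hopt] [[p1 [p2 [Hf' Hc']]] Hopt'].
  unfold cost in *.
  apply Rle_antisym.
  - assert (H := Hopt' (q1 + (d1' - d1)) q2).
    destruct Hf as (A1 & A2 & A3 & A4).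
    assert (c' <= a1 * (q1 + (d1' - d1)) + a2 * q2).
    { apply H. unfold PC. repeat split; try lra.
      replace (q1 + (d1' - d1) - d1') with (q1 - d1) by ring. exact A4. }
    unfold cost in H0. lra.
  - destruct Hf' as (A1 & A2 & A3 & A4).
    destruct (Rle_or_lt (d1' - d1) p1) as [Hp|Hp].
    + assert (c <= a1 * (p1 - (d1' - d1)) + a2 * p2).
      { apply Hopt. unfold PC. repeat split; try lra.
        replace (p1 - (d1' - d1) - d1) with (p1 - d1') by ring. exact A4. }
      lra.
    + assert (c <= a1 * 0 + a2 * (d1 + d2)).
      { apply Hopt. unfold PC. repeat split; try lra.
        apply (HC (p1 - d1')); [exact A4| lra]. }
      assert (0 <= (a2 - a1) * (d1' - d1 - p1)) by (apply Rmult_le_pos; lra).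
      nra.
Qed.

Lemma fed_pos B1 B2 fb1 fb2 : 0 < B1 -> 0 < B2 -> 0 < fb1 -> 0 < fb2 ->
  0 <= f_ed B1 B2 fb1 fb2.
Proof.
  intros. unfold f_ed. apply Rmult_le_pos; [lra|].
  unfold Rmin. destruct (Rle_dec _ _); left; apply Rdiv_lt_0_compat; auto.
Qed.

Theorem lemma2 (B1 B2 fb1 fb2 a1 a2 qb1 qb2 d1 d2 d1' d2' : R)
  (c_ed c_sc c_ed' c_sc' : R) :
  0 < B1 -> 0 < B2 -> 0 < fb1 -> 0 < fb2 ->
  0 < a1 -> a1 <= a2 ->
  0 <= qb1 -> 0 <= qb2 -> 0 <= d1 -> 0 <= d2 -> 0 <= d1' -> 0 <= d2' ->
  feasible (feas_ed B1 B2 fb1 fb2 qb1 qb2 d1 d2) ->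
  feasible (feas_sc B1 B2 fb1 fb2 qb1 qb2 d1 d2) ->
  feasible (feas_ed B1 B2 fb1 fb2 qb1 qb2 d1' d2') ->
  feasible (feas_sc B1 B2 fb1 fb2 qb1 qb2 d1' d2') ->
  d2' = d2 -> d1 <= d1' -> 0 < d1 + d2 -> d1' + d2 <= qb1 ->
  is_opt_value (feas_ed B1 B2 fb1 fb2 qb1 qb2 d1 d2) a1 a2 c_ed ->
  is_opt_value (feas_sc B1 B2 fb1 fb2 qb1 qb2 d1 d2) a1 a2 c_sc ->
  is_opt_value (feas_ed B1 B2 fb1 fb2 qb1 qb2 d1' d2') a1 a2 c_ed' ->
  is_opt_value (feas_sc B1 B2 fb1 fb2 qb1 qb2 d1' d2') a1 a2 c_sc' ->
  c_sc' / c_ed' <= c_sc / c_ed.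
Proof.
  intros HB1 HB2 Hf1 Hf2 Ha1 Ha12 Hq1 Hq2 Hd1 Hd2 Hd1' Hd2' _ _ _ _ E Hdd HD Hq
    Oed Osc Oed' Osc'.
  subst d2'.
  set (F := f_ed B1 B2 fb1 fb2) in *.
  set (f := f_sc fb1 fb2) in *.
  assert (HF : 0 <= F) by (apply fed_pos; auto).
  assert (Hf : 0 <= f) by (unfold f, f_sc, Rmin; destruct (Rle_dec _ _); lra).
  set (Ced := fun x => - F <= x <= F).
  set (Csc := fun x => (- F <= x <= F) /\ - f <= x <= f).
  assert (Eed : forall d1 q1 q2, feas_ed B1 B2 fb1 fb2 qb1 qb2 d1 d2 q1 q2 <->
                                 PC Ced qb1 qb2 d1 d2 q1 q2).
  { intros. unfold feas_ed, PC, Ced. fold F. tauto. }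
  assert (Esc : forall d1 q1 q2, feas_sc B1 B2 fb1 fb2 qb1 qb2 d1 d2 q1 q2 <->
                                 PC Csc qb1 qb2 d1 d2 q1 q2).
  { intros. unfold feas_sc, feas_ed, PC, Csc. fold F f. tauto. }
  assert (Sed : c_ed' = c_ed + a1 * (d1' - d1)).
  { apply (shift Ced a1 a2 qb1 qb2 d1 d2 d1'); try assumption.
    all: try (intros x y Hx Hy; unfold Ced in *; lra).
    all: try (apply (opt_ext _ _ _ _ _ (Eed d1)); assumption).
    all: try (apply (opt_ext _ _ _ _ _ (Eed d1')); assumption). }
  assert (Ssc : c_sc' = c_sc + a1 * (d1' - d1)).
  { apply (shift Csc a1 a2 qb1 qb2 d1 d2 d1'); try assumption.
    all: try (intros x y Hx Hy; unfold Csc in *; lra).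
    all: try (apply (opt_ext _ _ _ _ _ (Esc d1)); assumption).
    all: try (apply (opt_ext _ _ _ _ _ (Esc d1')); assumption). }
  assert (Hpos : 0 < c_ed).
  { destruct Oed as [[q1 [q2 [Hfe Hc]]] _].
    destruct Hfe as (A1 & A2 & A3 & A4). unfold cost in Hc.
    assert (a1 * q2 <= a2 * q2) by (apply Rmult_le_compat_r; lra).
    assert (0 < a1 * (d1 + d2)) by (apply Rmult_lt_0_compat; lra).
    nra. }
  assert (Hle : c_ed <= c_sc).
  { destruct Osc as [[q1 [q2 [Hfs Hc]]] _].
    destruct Oed as [_ Hopt]. rewrite <- Hc. apply Hopt. apply Hfs. }
  set (k := a1 * (d1' - d1)) in *.
  assert (Hk : 0 <= k) by (unfold k; apply Rmult_le_pos; lra).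
  rewrite Sed, Ssc.
  apply (Rmult_le_reg_r (c_ed * (c_ed + k))).
  - apply Rmult_lt_0_compat; lra.
  - field_simplify; try lra. nra.
Qed.
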